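(* Let $d'\ge 3$ and let $\alpha,\beta,\gamma,\delta$ be four pairwise distinct elements of $\{0,1,2\}^{d'}$. Then: (i) there exist distinct $v',w'\in\{0,1,2\}^{d'}\setminus\{\alpha,\beta,\gamma,\delta\}$ and indices $i,j\in[d']$ such that $v'_i=\alpha_i$ and $v'_j=\beta_j$; (ii) there exist distinct $v',w'\in\{0,1,2\}^{d'}\setminus\{\alpha,\beta,\gamma,\delta\}$, an index $j\in[d']$, and a $2$-element subset $\mathcal{I}\subseteq[d']$ such that $v'_j=\alpha_j$ and $v'_i=w'_i$ for each $i\in\mathcal{I}$.
   Context: For $u\in\{0,1,2\}^{d'}$, $u_i$ denotes its $i$-th coordinate, and $[d']=\{1,\dots,d'\}$. *)

(* Defs.v *)
From mathcomp Require Import all_boot.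
Set Implicit Arguments. Unset Strict Implicit. Unset Printing Implicit Defensive.

Definition ternary (d : nat) := {ffun 'I_d -> 'I_3}.

(* Main.v *)
Require Import Defs.
From mathcomp Require Import all_boot.

Lemma card5 (x y : 'I_3) :
  #|setX [set x] [set: 'I_3] :|: setX [set: 'I_3] [set y]| = 5.
Proof.
rewrite cardsU !cardsX !cards1 cardsT card_ord.
have -> : setX [set x] [set: 'I_3] :&: setX [set: 'I_3] [set y] = setX [set x] [set y].
  by apply/setP => p; rewrite !inE andbT andTb.
by rewrite cardsX !cards1.
Qed.

Section S.
Variables (d : nat) (hd : 3 <= d) (a b c e : ternary d).
Let i0 : 'I_d := Ordinal (leq_trans (isT : 0 < 3) hd).
Let i1 : 'I_d := Ordinal (leq_trans (isT : 1 < 3) hd).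
Let i2 : 'I_d := Ordinal (leq_trans (isT : 2 < 3) hd).
Let L := [:: a; b; c; e].
Let proj (u : ternary d) := (u i1, u i2).
Let E := [set proj u | u in L].

Lemma cardE4 : #|E| <= 4.
Proof. exact: leq_trans (leq_imset_card _ _) (card_size L). Qed.

Definition mk (z : 'I_3) (p : 'I_3 * 'I_3) : ternary d :=
  [ffun k => if k == i0 then z else if k == i1 then p.1 else if k == i2 then p.2 else a k].

Lemma mk0 z p : mk z p i0 = z. Proof. by rewrite ffunE eqxx. Qed.
Lemma mkp z p : proj (mk z p) = p.
Proof. by case: p => p1 p2; rewrite /proj !ffunE. Qed.

Lemma mk_notin z p : p \notin E -> mk z p \notin L.
Proof.
apply: contra => H; apply/imsetP; exists (mk z p) => //; by rewrite mkp.
Qed.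

Lemma exists_p (x y : 'I_3) : exists p, (p \notin E) && ((p.1 == x) || (p.2 == y)).
Proof.
set S := setX [set x] [set: 'I_3] :|: setX [set: 'I_3] [set y].
have : ~~ (S \subset E).
  apply/negP => /subset_leq_card; rewrite card5 => H.
  by have := leq_trans H cardE4.
case/subsetPn => p pS pE; exists p; rewrite pE /=.
by move: pS; rewrite !inE andbT.
Qed.

Lemma exists_other (u : ternary d) (v : ternary d) : exists w : ternary d, (w \notin L) && (w != v).
Proof.
have : ~~ ([set: ternary d] \subset [set x in v :: L]).
  apply/negP => /subset_leq_card; rewrite cardsT card_ffun !card_ord cardsE.
  move/leq_trans => /(_ _ (card_size _)) /=.
  have : 3 ^ 3 <= 3 ^ d by rewrite leq_exp2l.
  by move=> H1 H2; have := leq_trans H1 H2.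
case/subsetPn => w _; rewrite inE in_cons negb_or => /andP [H1 H2].
by exists w; apply/andP.
Qed.

End S.

Theorem claim4p2 (d : nat) (hd : 3 <= d) (a b c e : ternary d) :
  a != b -> a != c -> a != e -> b != c -> b != e -> c != e ->
  (exists (v w : ternary d) (i j : 'I_d),
      [/\ v != w, v \notin [:: a; b; c; e], w \notin [:: a; b; c; e],
          v i = a i & v j = b j]) /\
  (exists (v w : ternary d) (j : 'I_d) (I : {set 'I_d}),
      [/\ v != w, v \notin [:: a; b; c; e], w \notin [:: a; b; c; e],
          v j = a j & #|I| = 2] /\ (forall i, i \in I -> v i = w i)).
Proof.
move=> _ _ _ _ _ _.
set i0 : 'I_d := Ordinal (leq_trans (isT : 0 < 3) hd).
set i1 : 'I_d := Ordinal (leq_trans (isT : 1 < 3) hd).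
set i2 : 'I_d := Ordinal (leq_trans (isT : 2 < 3) hd).
split.
- have [p /andP [pE pb]] := exists_p d hd a b c e (b i1) (b i2).
  set v := mk d hd a (a i0) p.
  have vL := mk_notin d hd a b c e (a i0) p pE.
  have [w /andP [wL wv]] := exists_other d hd a b c e v v.
  exists v, w, i0.
  case/orP: pb => /eqP pb.
  + exists i1; split => //; first by rewrite eq_sym.
    * exact: mk0.
    * by rewrite /v ffunE -pb.
  + exists i2; split => //; first by rewrite eq_sym.
    * exact: mk0.
    * by rewrite /v ffunE -pb.
- have [p /andP [pE _]] := exists_p d hd a b c e (b i1) (b i2).
  set z' : 'I_3 := if a i0 == ord0 then inord 1 else ord0.
  exists (mk d hd a (a i0) p), (mk d hd a z' p), i0, [set i1; i2].
  split; [split|].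
  + apply/eqP => /(congr1 (fun f : ternary d => f i0)).
    rewrite !mk0 /z'; case: eqP => [-> | //]; by rewrite /inord /insubd insubT.
  + exact: mk_notin.
  + exact: mk_notin.
  + exact: mk0.
  + by rewrite cards2.
  + by move=> i; rewrite !inE => /orP [] /eqP ->; rewrite !ffunE.
Qed.
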